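(* Let $f$ and $g$ be multiplicative functions with $|f(n)|,|g(n)|\le1$ for all $n$, and let $h$ be defined by $g=f*h$. Suppose $\mathbb{D}_\beta(f,g)<\infty$ for some $\beta>0$, and let $\sigma>1/2$ with $\sigma\ge\beta$. Then the series $\sum_{n=1}^\infty\frac{|h(n)|^2}{n^\sigma}$ converges if the quantity $H(\sigma)$ is finite.
   Context: $(f*h)(n)=\sum_{dm=n}f(d)h(m)$. $\mathbb{D}_\beta(f,g)^2:=\sum_p \frac{1-\Re(f(p)\overline{g(p)})}{p^\beta}$ (sum over primes). $H(\sigma):=\sum_{p\le 4^{1/\sigma}}\sum_{k=0}^\infty \frac{|h(p^k)|^2}{p^{k\sigma}}$. *)

(* Defs.v *)
From mathcomp Require Import all_boot all_order all_algebra.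
From mathcomp Require Import all_classical all_reals all_analysis.
From mathcomp Require Import complex.
Set Implicit Arguments. Unset Strict Implicit. Unset Printing Implicit Defensive.
Import Order.TTheory GRing.Theory Num.Theory.
Local Open Scope ring_scope.

Notation normc := (@ComplexField.Normc.normc _).

Section Defs.

Variable R : realType.

(* arithmetic functions are maps nat -> R[i]; the value at 0 is irrelevant *)
Definition arith_multiplicative (f : nat -> R[i]) : Prop :=
  f 1%N = 1 /\ forall m n : nat, coprime m n -> f (m * n)%N = f m * f n.

Definition dconv (f h : nat -> R[i]) (n : nat) : R[i] :=
  \sum_(d <- divisors n) f d * h (n %/ d)%N.

(* D_beta(f,g)^2 = sum_p (1 - Re(f(p) conj(g(p)))) / p^beta, an extended real
   (series of nonnegative terms when |f|,|g| <= 1) *)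
Definition Dist2 (beta : R) (f g : nat -> R[i]) : \bar R :=
  (\sum_(0 <= p <oo | prime p)
     ((1 - complex.Re (f p * (g p)^*)%C) / (p%:R `^ beta))%:E)%E.

Definition Hsig (sigma : R) (h : nat -> R[i]) : \bar R :=
  (\sum_(0 <= p <oo | prime p && (p%:R <= 4 `^ sigma^-1)%R)
     \sum_(0 <= k <oo) ((normc (h (p ^ k)%N)) ^+ 2 / ((p ^ k)%N%:R `^ sigma))%:E)%E.

End Defs.

(* Main.v *)
Require Import Defs.
From mathcomp Require Import all_boot all_order all_algebra.
From mathcomp Require Import all_classical all_reals all_analysis.
From mathcomp Require Import complex.
From mathcomp Require Import ring lra.
From mathcomp Require Import zify.
Import Order.TTheory GRing.Theory Num.Theory numFieldNormedType.Exports.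
Lemma divisors_mulC m n : 0 < m -> 0 < n -> coprime m n ->
  perm_eq (divisors (m * n)) [seq d1 * d2 | d1 <- divisors m, d2 <- divisors n].
Proof.
move=> m0 n0 cmn.
apply: uniq_perm; first exact: divisors_uniq.
  apply: allpairs_uniq; try exact: divisors_uniq.
  move=> [a b] [c e] /allpairsP [[x y] [/= xm yn [-> ->]]] /allpairsP [[z w] [/= zm wn [-> ->]]] /=.
  move: xm yn zm wn; rewrite -!dvdn_divisors // => xm yn zm wn E.
  have cy : coprime m y by apply: coprime_dvdr yn cmn.
  have cw : coprime m w by apply: coprime_dvdr wn cmn.
  have cx : coprime n x by rewrite coprime_sym; apply: coprime_dvdl xm cmn.
  have cz : coprime n z by rewrite coprime_sym; apply: coprime_dvdl zm cmn.
  have Ex : x = gcdn m (x * y) by rewrite Gauss_gcdl //; apply/esym/gcdn_idPr.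
  have Ez : z = gcdn m (z * w) by rewrite Gauss_gcdl //; apply/esym/gcdn_idPr.
  have Ey : y = gcdn n (x * y) by rewrite Gauss_gcdr //; apply/esym/gcdn_idPr.
  have Ew : w = gcdn n (z * w) by rewrite Gauss_gcdr //; apply/esym/gcdn_idPr.
  by congr pair; [rewrite Ex Ez E | rewrite Ey Ew E].
move=> d; rewrite -dvdn_divisors ?muln_gt0 ?m0 //; apply/idP/allpairsP.
  move=> dmn; exists (gcdn d m, gcdn d n); rewrite /= -!dvdn_divisors //.
  rewrite !dvdn_gcdr; split=> //; apply/eqP; rewrite eqn_dvd; apply/andP; split.
    rewrite muln_gcdl dvdn_gcd; apply/andP; split.
      by rewrite muln_gcdr dvdn_gcd dvdn_mulr //= mulnC dvdn_mull.
    by rewrite muln_gcdr dvdn_gcd dvdn_mull.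
  rewrite Gauss_dvd ?dvdn_gcdl //.
  by apply: coprime_dvdl (dvdn_gcdr _ _) _; apply: coprime_dvdr (dvdn_gcdr _ _) cmn.
move=> [[a b] [/= + + ->]]; rewrite -!dvdn_divisors // => am bn.
exact: dvdn_mul.
Qed.

Lemma divisors_pfactor p k : prime p ->
  perm_eq (divisors (p ^ k)) [seq p ^ j | j <- iota 0 k.+1].
Proof.
move=> pp; have p0 := prime_gt0 pp.
apply: uniq_perm; first exact: divisors_uniq.
  rewrite map_inj_uniq ?iota_uniq //; apply: expnI; exact: prime_gt1.
move=> d; rewrite -dvdn_divisors ?expn_gt0 ?p0 //; apply/dvdn_pfactor/mapP => //.
  by move=> [j jk ->]; exists j => //; rewrite mem_iota.
by move=> [j]; rewrite mem_iota => /andP[_ jk] ->; exists j.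
Qed.
Local Open Scope ring_scope.

Section Mult.
Variable R : realType.
Local Notation C := (R[i]).

Lemma dconv_mul (F H : nat -> C) m n : (0 < m)%N -> (0 < n)%N -> coprime m n ->
  dconv F H (m * n) =
  \sum_(d1 <- divisors m) \sum_(d2 <- divisors n) F (d1 * d2)%N * H (m %/ d1 * (n %/ d2))%N.
Proof.
move=> m0 n0 cmn; rewrite /dconv (perm_big _ (divisors_mulC _ _ m0 n0 cmn)).
rewrite big_allpairs_dep /=; apply: eq_big_seq => d1; rewrite -dvdn_divisors // => d1m.
apply: eq_big_seq => d2; rewrite -dvdn_divisors // => d2n.
have d10 : (0 < d1)%N by apply: dvdn_gt0 d1m.
have d20 : (0 < d2)%N by apply: dvdn_gt0 d2n.
by congr (_ * H _); rewrite -{1}(divnK d1m) -{1}(divnK d2n) mulnACA mulnK // muln_gt0 d10.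
Qed.

Variables f g h : nat -> C.
Hypothesis hf : arith_multiplicative f.
Hypothesis hg : arith_multiplicative g.
Hypothesis hconv : forall n : nat, (0 < n)%N -> g n = dconv f h n.

Lemma h1 : h 1%N = 1.
Proof.
have := hconv 1%N isT; rewrite /dconv (_ : divisors 1 = [:: 1%N]) //.
by rewrite big_seq1 hg.1 hf.1 mul1r divn1 => <-.
Qed.

Lemma h_mul m n : (0 < m)%N -> (0 < n)%N -> coprime m n -> h (m * n)%N = h m * h n.
Proof.
move=> m0 n0 cmn; move: {2}(m * n)%N (leqnn (m * n)) => N.
elim: N m n m0 n0 cmn => [|N IH] m n m0 n0 cmn le_mn.
  by move: le_mn; rewrite leqn0 muln_eq0 => /orP[] /eqP E; move: m0 n0; rewrite E.
have key : \sum_(d1 <- divisors m) \sum_(d2 <- divisors n)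
    f d1 * f d2 * (h (m %/ d1 * (n %/ d2))%N - h (m %/ d1) * h (n %/ d2)) = 0.
  have E1 : g (m * n)%N = g m * g n by rewrite hg.2.
  rewrite hconv ?muln_gt0 ?m0 // dconv_mul // hconv // hconv // /dconv in E1.
  apply: (@etrans _ _ ((\sum_(d1 <- divisors m) \sum_(d2 <- divisors n) f (d1 * d2)%N * h (m %/ d1 * (n %/ d2))%N) -
     (\sum_(d <- divisors m) f d * h (m %/ d)%N) * \sum_(d <- divisors n) f d * h (n %/ d)%N)); last by rewrite E1 subrr.
  rewrite big_distrl /= -sumrB; apply: eq_big_seq => d1; rewrite -dvdn_divisors // => d1m.
  rewrite big_distrr /= -sumrB; apply: eq_big_seq => d2; rewrite -dvdn_divisors // => d2n.
  have c12 : coprime d1 d2.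
    by apply: coprime_dvdl d1m _; apply: coprime_dvdr d2n cmn.
  rewrite hf.2 //; ring.
have claim d1 d2 : (d1 %| m)%N -> (d2 %| n)%N -> (d1 != 1%N) || (d2 != 1%N) ->
    h (m %/ d1 * (n %/ d2))%N = h (m %/ d1) * h (n %/ d2).
  move=> d1m d2n ne.
  have d10 : (0 < d1)%N by apply: dvdn_gt0 d1m.
  have d20 : (0 < d2)%N by apply: dvdn_gt0 d2n.
  apply: IH.
  - by rewrite divn_gt0 // dvdn_leq.
  - by rewrite divn_gt0 // dvdn_leq.
  - by apply: (coprime_dvdl (dvdn_div d1m)); apply: (coprime_dvdr (dvdn_div d2n)) cmn.
  have -> : (m %/ d1 * (n %/ d2) = (m * n) %/ (d1 * d2))%N.
    by rewrite -{2}(divnK d1m) -{2}(divnK d2n) mulnACA mulnK // muln_gt0 d10.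
  rewrite -ltnS; apply: leq_trans le_mn; apply: ltn_Pdiv; last by rewrite muln_gt0 m0.
  case: d1 d1m d10 ne => [|[|d1]] // d1m _; rewrite ?eqxx /=.
    by case: d2 d2n d20 => [|[|d2]].
  by rewrite mulSn; case: d2 d20 {d2n} => [|d2] //; rewrite addSn ltnS ltnS addn_gt0 orbC ltn0Sn.
rewrite (bigD1_seq 1%N) ?divisor1 ?divisors_uniq //= in key.
rewrite [X in _ + X]big1_seq ?addr0 in key; last first.
  move=> d1 /andP[ne1 d1in]; rewrite big_seq; apply: big1 => d2 d2in.
  by rewrite claim ?subrr ?mulr0 ?ne1 // dvdn_divisors.
rewrite (bigD1_seq 1%N) ?divisor1 ?divisors_uniq //= in key.
rewrite big1_seq ?addr0 in key; last first.
  move=> d2 /andP[ne2 d2in].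
  by rewrite claim ?subrr ?mulr0 ?ne2 ?orbT ?dvd1n // dvdn_divisors.
move: key; rewrite hf.1 !divn1 !mul1r => /eqP; by rewrite subr_eq0 => /eqP.
Qed.

Lemma normc_sum (I : Type) (r : seq I) (P : pred I) (F : I -> C) :
  normc (\sum_(i <- r | P i) F i) <= \sum_(i <- r | P i) normc (F i).
Proof.
elim/big_rec2: _ => [|i y1 y2 _ IH]; first by rewrite ComplexField.Normc.normc0.
by apply: le_trans (le_normcD _ _) _; rewrite lerD2l.
Qed.

Lemma normc_ge0 (z : C) : 0 <= normc z.
Proof. by case: z => a b /=; rewrite sqrtr_ge0. Qed.

Lemma normc2 (z : C) : normc z ^+ 2 = complex.Re z ^+ 2 + complex.Im z ^+ 2.
Proof. by case: z => a b /=; rewrite sqr_sqrtr // addr_ge0 // sqr_ge0. Qed.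

Lemma g_pow p k : prime p ->
  g (p ^ k)%N = \sum_(0 <= j < k.+1) f (p ^ j)%N * h (p ^ (k - j))%N.
Proof.
move=> pp; have p0 := prime_gt0 pp.
rewrite hconv ?expn_gt0 ?p0 // /dconv (perm_big _ (divisors_pfactor _ k pp)) big_map.
apply: eq_big_seq => j; rewrite mem_iota add0n => /andP[_ jk].
by rewrite expnB.
Qed.

Hypothesis normf : forall n : nat, (0 < n)%N -> normc (f n) <= 1.
Hypothesis normg : forall n : nat, (0 < n)%N -> normc (g n) <= 1.

Lemma h_pow_bound p k : prime p -> normc (h (p ^ k)%N) <= 2%:R ^+ k.
Proof.
move=> pp; have p0 := prime_gt0 pp.
elim/ltn_ind: k => k IH.
have E := g_pow p k pp; rewrite big_nat_recl // expn0 hf.1 mul1r subn0 in E.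
have -> : h (p ^ k)%N = g (p ^ k)%N - \sum_(0 <= j < k) f (p ^ j.+1)%N * h (p ^ (k - j.+1))%N.
  by rewrite E addrK.
apply: le_trans (le_normcD _ _) _; rewrite normcN.
have -> : (2%:R ^+ k : R) = 1 + \sum_(0 <= j < k) 2%:R ^+ (k - j.+1).
  rewrite big_nat_rev /= add0n.
  have -> : \sum_(0 <= i < k) (2%:R ^+ (k - (k - i.+1).+1) : R) = \sum_(0 <= i < k) 2%:R ^+ i.
    apply: eq_big_nat => i /andP[_ ik]; congr (_ ^+ _).
    by lia.
  have two1 : (2%:R - 1 : R) = 1 by lra.
  by rewrite big_mkord -[LHS](subrK 1) subrX1 addrC two1 mul1r.
apply: lerD; first by apply: normg; rewrite expn_gt0 p0.
apply: (le_trans (normc_sum _ _ _ _)); apply: ler_sum_nat => j /andP[_ jk].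
rewrite ComplexField.Normc.normcM -[X in _ <= X]mul1r.
apply: ler_pM; rewrite ?normc_ge0 //; first by apply: normf; rewrite expn_gt0 p0.
by apply: IH; lia.
Qed.

Lemma sum_inj_le (T1 T2 : eqType) (r : seq T1) (P : pred T1) (r' : seq T2)
    (phi : T1 -> T2) (G : T2 -> R) :
  uniq r -> uniq r' -> {in [pred x | (x \in r) && P x] &, injective phi} ->
  (forall x, x \in r -> P x -> phi x \in r') -> (forall y, 0 <= G y) ->
  \sum_(x <- r | P x) G (phi x) <= \sum_(y <- r') G y.
Proof.
move=> ur ur' inj sub G0.
rewrite -big_filter -(big_map phi xpredT G).
set l := map phi _.
have ul : uniq l.
  rewrite map_inj_in_uniq ?filter_uniq // => x y; rewrite !mem_filter.
  by move=> /andP[Px rx] /andP[Py ry]; apply: inj; rewrite inE ?rx ?ry ?Px ?Py.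
have sl : {subset l <= r'}.
  by move=> y /mapP[x]; rewrite mem_filter => /andP[Px rx] ->; apply: sub.
rewrite [X in _ <= X](bigID (fun y => y \in l)) /= -[X in X <= _]addr0; apply: lerD; last first.
  by apply: sumr_ge0 => y _; apply: G0.
have pl : perm_eq [seq y <- r' | y \in l] l.
  apply: uniq_perm; rewrite ?filter_uniq //.
  by move=> y; rewrite mem_filter; case: (boolP (y \in l)) => // /sl ->.
by rewrite -[X in _ <= X]big_filter (perm_big _ pl).
Qed.

Lemma primes_nil1 n : (0 < n)%N -> primes n = [::] -> n = 1%N.
Proof.
move=> n0 pn; case: (ltngtP n 1) => // [|n1]; first by rewrite ltnS leqn0 => /eqP E; move: n0; rewrite E.
have : pdiv n \in primes n by rewrite mem_primes pdiv_prime // n0 pdiv_dvd.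
by rewrite pn.
Qed.

Section Euler.
Variable a : nat -> R.
Hypothesis a0 : forall n, 0 <= a n.
Hypothesis a1 : a 1%N = 1.
Hypothesis amul : forall m n, (0 < m)%N -> (0 < n)%N -> coprime m n -> a (m * n)%N = a m * a n.

Lemma euler_le N (s : seq nat) : all prime s ->
  \sum_(n <- iota 0 N.+1 | (0 < n)%N && all (fun q => q \in s) (primes n)) a n <=
  \prod_(p <- s) \sum_(k <- iota 0 N.+1) a (p ^ k)%N.
Proof.
elim: s => [|p s IH].
  move=> _; rewrite big_nil.
  rewrite (eq_bigl (pred1 1%N)); last first.
    move=> n /=; apply/idP/idP.
      move=> /andP[n0]; case E: (primes n) => [|q l] //= _.
      by rewrite (primes_nil1 n n0 E).
    by move=> /eqP ->.
  case: N => [|N]; first by rewrite big_cons big_nil /= ler01.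
  rewrite -big_filter filter_pred1_uniq; [by rewrite big_seq1 a1 | exact: (iota_uniq 0 N.+2) | by rewrite mem_iota].
move=> /andP[pp ps]; have p1 := prime_gt1 pp; have p0 := prime_gt0 pp.
pose Ps m := (0 < m)%N && all (fun q => q \in s) (primes m).
pose G (x : nat * nat) := a (p ^ x.1)%N * (if Ps x.2 then a x.2 else 0).
pose phi n := (logn p n, (n`_p^')%N).
have G0 y : 0 <= G y by rewrite /G; case: ifP => _; rewrite ?mulr0 // mulr_ge0.
have Gphi n : (0 < n)%N && all (fun q => q \in p :: s) (primes n) -> a n = G (phi n).
  move=> /andP[n0 alln]; rewrite /G /phi /=.
  have -> : Ps (n`_p^')%N.
    rewrite /Ps part_gt0 primes_part all_filter.
    apply/allP => q qn; apply/implyP; rewrite !inE => qp.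
    by move/allP: alln => /(_ q qn); rewrite inE (negPf qp).
  by rewrite -p_part -amul ?part_gt0 ?coprime_partC // partnC.
apply: le_trans (_ : \sum_(y <- [seq (x1, x2) | x1 <- iota 0 N.+1, x2 <- iota 0 N.+1]) G y <= _).
  rewrite (eq_bigr (fun n => G (phi n))); last by move=> n; apply: Gphi.
  apply: sum_inj_le => //.
  - exact: iota_uniq.
  - by apply: allpairs_uniq; rewrite ?iota_uniq // => -[? ?] [? ?] _ _.
  - move=> n1 n2; rewrite !inE => /andP[_ /andP[n10 _]] /andP[_ /andP[n20 _]] [E1 E2].
    by rewrite -(partnC p n10) -(partnC p n20) !p_part E1 E2.
  - move=> n; rewrite mem_iota add0n => nN /andP[n0 _].
    have pn : (n`_p <= n)%N by apply: dvdn_leq => //; apply: dvdn_part.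
    apply: allpairs_f; rewrite mem_iota add0n.
      apply: leq_ltn_trans nN; apply: leq_trans pn; rewrite p_part; apply: ltnW; exact: ltn_expl.
    by apply: leq_ltn_trans nN; apply: dvdn_leq => //; apply: dvdn_part.
rewrite big_allpairs big_cons /= big_distrl /=; apply: ler_sum => k _.
rewrite /G /= -big_distrr /=; apply: ler_wpM2l => //.
by rewrite -big_mkcond; apply: IH.
Qed.
End Euler.

Lemma powRX (x s : R) k : 0 <= x -> (x ^+ k) `^ s = (x `^ s) ^+ k.
Proof.
move=> x0; rewrite -powR_mulrn // -powRrM mulrC powRrM powR_mulrn //; exact: powR_ge0.
Qed.

Lemma powR_le_base (x y s : R) : 0 <= s -> 0 <= x -> x <= y -> x `^ s <= y `^ s.
Proof.
move=> s0 x0 xy; apply: (ge0_ler_powR s0) => //; rewrite nnegrE //; exact: le_trans xy.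
Qed.

Lemma geom_le (q : R) J : 0 <= q < 1 -> \sum_(0 <= j < J) q ^+ j <= (1 - q)^-1.
Proof.
move=> /andP[q0 q1]; have q1' : 0 < 1 - q by rewrite subr_gt0.
rewrite -(ler_pM2l q1') mulfV ?gt_eqF //.
have -> : (1 - q) * \sum_(0 <= j < J) q ^+ j = 1 - q ^+ J.
  by rewrite big_mkord -opprB mulNr -subrX1 opprB.
by rewrite lerBlDr lerDl exprn_ge0.
Qed.

Lemma sum_sub_le (r : seq nat) (P Q : pred nat) (F : nat -> R) :
  (forall n, P n -> Q n) -> (forall n, Q n -> 0 <= F n) ->
  \sum_(n <- r | P n) F n <= \sum_(n <- r | Q n) F n.
Proof.
move=> PQ F0; rewrite big_mkcond [X in _ <= X]big_mkcond; apply: ler_sum => n _.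
case: ifP => Pn; first by rewrite (PQ n Pn) lexx.
by case: ifP => // Qn; apply: F0.
Qed.

Lemma zeta_bound (s : R) : 1 < s -> exists Z : R, forall N,
  \sum_(1 <= n < N) (n%:R `^ s)^-1 <= Z.
Proof.
move=> s1; have s0 : 0 < s by apply: lt_trans s1.
pose q : R := 2%:R / (2%:R `^ s).
have p2 : 0 < (2%:R : R) `^ s by apply: powR_gt0.
have q0 : 0 <= q by rewrite divr_ge0 ?ler0n ?powR_ge0.
have q1 : q < 1.
  rewrite ltr_pdivrMr // mul1r.
  rewrite -[X in _ < X](mulr_powRB1 (x := 2%:R)) ?ler0n // -[X in X < _]mulr1 ltr_pM2l ?ltr0n //.
  rewrite /powR pnatr_eq0 /= expR_gt1 mulr_gt0 ?subr_gt0 //.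
  by rewrite ln_gt0 // ltr1n.
exists (1 - q)^-1 => N.
have key J : \sum_(1 <= n < 2 ^ J) (n%:R `^ s)^-1 <= \sum_(0 <= j < J) q ^+ j.
  elim: J => [|J IH]; first by rewrite expn0 big_geq // big_geq.
  rewrite (big_cat_nat (n := 2 ^ J)) ?expn_gt0 //=; last by rewrite leq_exp2l.
  rewrite big_nat_recr //=; apply: lerD => //.
  apply: le_trans (_ : \sum_((2 ^ J)%N <= i < (2 ^ J.+1)%N) (((2 ^ J)%N%:R : R) `^ s)^-1 <= _).
    apply: ler_sum_nat => n /andP[Jn _].
    have n0 : (0 < n)%N by apply: leq_trans Jn; rewrite expn_gt0.
    rewrite lef_pV2 ?posrE ?powR_gt0 ?ltr0n ?expn_gt0 //.
    by apply: powR_le_base; rewrite ?ler0n ?ler_nat // ltW.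
  rewrite sumr_const_nat expnS mul2n -addnn addnK natrX powRX ?ler0n //.
  by rewrite /q expr_div_n -natrX mulr_natl.
case: N => [|N]; first by rewrite big_geq // invr_ge0 subr_ge0 ltW.
apply: le_trans (geom_le q N.+1 _); last by rewrite q0.
apply: le_trans (key N.+1).
rewrite (big_cat_nat (n := N.+1) (m := 1%N) (p := 2 ^ N.+1)) //=; last first.
  by apply: ltnW; apply: ltn_expl.
rewrite lerDl; apply: sumr_ge0 => i _; rewrite invr_ge0; exact: powR_ge0.
Qed.

Lemma cplx_ineq (x y : C) : normc x <= 1 -> normc y <= 1 ->
  0 <= 1 - complex.Re (x * y^*)%C /\ normc (y - x) ^+ 2 <= 2%:R * (1 - complex.Re (x * y^*)%C).
Proof.
move=> nx ny.
have nx2 : normc x ^+ 2 <= 1 by rewrite expr_le1 // normc_ge0.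
have ny2 : normc y ^+ 2 <= 1 by rewrite expr_le1 // normc_ge0.
move: nx2 ny2; rewrite !normc2; clear nx ny.
case: x => a b; case: y => c d /= Hx Hy.
have s1 := sqr_ge0 (a - c); have s2 := sqr_ge0 (b - d).
split; nra.
Qed.

Variables beta sigma : R.
Hypothesis hb : 0 < beta.
Hypothesis hD : (Dist2 beta f g < +oo)%E.
Hypothesis hs : 1 / 2 < sigma.
Hypothesis hbs : beta <= sigma.
Hypothesis hH : (Hsig sigma h < +oo)%E.

Let a (n : nat) : R := normc (h n) ^+ 2 / (n%:R `^ sigma).

Lemma a0 n : 0 <= a n.
Proof. by rewrite /a divr_ge0 ?exprn_ge0 ?normc_ge0 ?powR_ge0. Qed.

Lemma a1 : a 1%N = 1.
Proof. by rewrite /a h1 ComplexField.Normc.normc1 powR1 expr1n divr1. Qed.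

Lemma amul m n : (0 < m)%N -> (0 < n)%N -> coprime m n -> a (m * n)%N = a m * a n.
Proof.
move=> m0 n0 cmn; rewrite /a h_mul // ComplexField.Normc.normcM natrM powRM ?ler0n //.
by rewrite exprMn mulf_div.
Qed.

Let d (p : nat) : R := (1 - complex.Re (f p * (g p)^*)%C) / (p%:R `^ beta).

Lemma d_ge0 p : prime p -> 0 <= d p.
Proof.
move=> pp; have p0 := prime_gt0 pp.
rewrite /d divr_ge0 ?powR_ge0 //.
by case: (cplx_ineq _ _ (normf p p0) (normg p p0)).
Qed.

Lemma ap_le p : prime p -> a p <= 2%:R * d p.
Proof.
move=> pp; have p0 := prime_gt0 pp.
have hp : h p = g p - f p.
  have := g_pow p 1 pp; rewrite big_nat_recl // big_nat1 expn0 expn1 ?subn0 ?subnn ?expn0 ?expn1.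
  by rewrite hf.1 h1 mul1r mulr1 => ->; rewrite addrK.
case: (cplx_ineq _ _ (normf p p0) (normg p p0)) => e0 ineq.
rewrite /a /d hp mulrA.
have pb : 0 < p%:R `^ beta by rewrite powR_gt0 // ltr0n.
have ps : 0 < p%:R `^ sigma by rewrite powR_gt0 // ltr0n.
have pbs : p%:R `^ beta <= p%:R `^ sigma by apply: ler_powR => //; rewrite ler1n prime_gt0.
apply: le_trans (_ : normc (g p - f p) ^+ 2 / p%:R `^ beta <= _).
  by apply: ler_wpM2l; rewrite ?exprn_ge0 ?normc_ge0 // lef_pV2 ?posrE.
by apply: ler_wpM2r => //; rewrite invr_ge0 ltW.
Qed.

Lemma Dist2_bound M : \sum_(0 <= p < M | prime p) d p <= fine (Dist2 beta f g).
Proof.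
have D0 : (0 <= Dist2 beta f g)%E.
  by apply: nneseries_ge0 => p _ pp; rewrite lee_fin; apply: d_ge0.
rewrite -lee_fin fineK ?ge0_fin_numE // -sumEFin.
by apply: nneseries_lim_ge => p _ pp; rewrite lee_fin; apply: d_ge0.
Qed.

Lemma Hsig_bound M :
  \sum_(0 <= p < M | prime p && (p%:R <= 4 `^ sigma^-1)) \sum_(0 <= k < M) a (p ^ k)%N
  <= fine (Hsig sigma h).
Proof.
have E0 p : (0 <= \sum_(0 <= k <oo) (a (p ^ k)%N)%:E)%E.
  by apply: nneseries_ge0 => k _ _; rewrite lee_fin a0.
have H0 : (0 <= Hsig sigma h)%E by apply: nneseries_ge0 => p _ _; apply: E0.
rewrite -lee_fin fineK ?ge0_fin_numE // -sumEFin.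
apply: le_trans (nneseries_lim_ge M _); last by move=> p _ _; apply: E0.
apply: lee_sum => p _; rewrite -sumEFin.
by apply: nneseries_lim_ge => k _ _; rewrite lee_fin a0.
Qed.

Lemma a_pow p k : prime p -> a (p ^ k)%N <= (4%:R / p%:R `^ sigma) ^+ k.
Proof.
move=> pp; have p0 := prime_gt0 pp.
have hb2 := h_pow_bound p k pp.
have n2 : normc (h (p ^ k)%N) ^+ 2 <= 4%:R ^+ k.
  rewrite expr2 (_ : 4%:R ^+ k = 2%:R ^+ k * 2%:R ^+ k :> R); last first.
    by rewrite -exprMn -natrM.
  by apply: ler_pM; rewrite ?normc_ge0.
rewrite /a expr_div_n natrX powRX ?ler0n //.
by apply: ler_wpM2r => //; rewrite invr_ge0 exprn_ge0 // powR_ge0.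
Qed.

Lemma sigma_gt0 : 0 < sigma.
Proof. by apply: lt_trans hs; rewrite divr_gt0. Qed.

Lemma large_r : exists rho : R, [/\ 0 <= rho, rho < 1 &
  forall p, prime p -> ~~ (p%:R <= 4 `^ sigma^-1) -> 4%:R / p%:R `^ sigma <= rho].
Proof.
have s0 := sigma_gt0.
set T : R := 4 `^ sigma^-1.
have T0 : 0 <= T by apply: powR_ge0.
have ex : exists n, T < n%:R by exists (Num.Def.archi_bound T); apply: archi_boundP.
case: (ex_minnP ex) => p0 Tp0 minp0.
have TS : T `^ sigma = 4 by rewrite /T -powRrM mulVf ?gt_eqF // powRr1 // ler0n.
have p0s : 4 < p0%:R `^ sigma.
  rewrite -TS; apply: gt0_ltr_powR => //; rewrite nnegrE // ltW //; exact: le_lt_trans Tp0.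
have p0s0 : 0 < p0%:R `^ sigma by apply: lt_trans p0s; rewrite ltr0n.
exists (4%:R / p0%:R `^ sigma); split.
- by rewrite divr_ge0 // ltW.
- by rewrite ltr_pdivrMr // mul1r.
move=> p pp; rewrite -ltNge => Tp.
have le_p : (p0 <= p)%N by apply: minp0.
apply: ler_wpM2l; first by rewrite ler0n.
rewrite lef_pV2 ?posrE //; last by rewrite powR_gt0 // ltr0n prime_gt0.
by apply: powR_le_base; rewrite ?ler0n ?ler_nat // ltW.
Qed.

Lemma X_large rho N p : 0 <= rho -> rho < 1 -> prime p ->
  4%:R / p%:R `^ sigma <= rho ->
  \sum_(0 <= k < N) a (p ^ k.+1)%N <=
  2%:R * d p + 16%:R * (1 - rho)^-1 * ((p%:R `^ sigma) ^+ 2)^-1.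
Proof.
move=> r0 r1 pp rp; have p0 := prime_gt0 pp.
have ps : 0 < p%:R `^ sigma by rewrite powR_gt0 // ltr0n.
set r := 4%:R / p%:R `^ sigma.
have rge0 : 0 <= r by rewrite divr_ge0 // ltW.
have dp := d_ge0 p pp.
have c0 : 0 <= 16%:R * (1 - rho)^-1 * ((p%:R `^ sigma) ^+ 2)^-1.
  by rewrite !mulr_ge0 // invr_ge0 ?subr_ge0 ?ltW // exprn_ge0 // ltW.
case: N => [|N]; first by rewrite big_geq // addr_ge0 // mulr_ge0.
rewrite big_nat_recl //= expn1; apply: lerD; first exact: ap_le.
apply: le_trans (_ : \sum_(0 <= k < N) r ^+ 2 * r ^+ k <= _).
  apply: ler_sum_nat => k _; rewrite -exprD addnC addn2; exact: (a_pow p k.+2 pp).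
rewrite -big_distrr /=.
have r2 : r ^+ 2 = 16%:R * ((p%:R `^ sigma) ^+ 2)^-1.
  by rewrite /r expr_div_n -natrX.
rewrite r2 mulrAC; apply: ler_wpM2r; first by rewrite invr_ge0 exprn_ge0 // ltW.
apply: ler_wpM2l; first by rewrite ler0n.
apply: le_trans (geom_le r N _) _; first by rewrite rge0 /=; apply: le_lt_trans r1.
rewrite lef_pV2 ?posrE ?subr_gt0 //; first by rewrite lerB.
by apply: le_lt_trans r1.
Qed.

Lemma partial_bound : exists M : R, forall N,
  \sum_(0 <= k < N) a k.+1 <= M.
Proof.
have [rho [r0 r1 rhoP]] := large_r.
have s2 : 1 < sigma * 2%:R by move: hs; lra.
have [Z HZ] := zeta_bound _ s2.
set c : R := 16%:R * (1 - rho)^-1.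
have c0 : 0 <= c by rewrite /c mulr_ge0 // invr_ge0 subr_ge0 ltW.
exists (expR (fine (Hsig sigma h) + (2%:R * fine (Dist2 beta f g) + c * Z))) => N.
set small := fun p : nat => p%:R <= 4 `^ sigma^-1.
pose s := [seq q <- iota 0 N.+1 | prime q].
pose P n := (0 < n)%N && all (fun q => q \in s) (primes n).
pose L p := \sum_(0 <= k < N.+1) a (p ^ k)%N.
have S1 : \sum_(0 <= k < N) a k.+1 <= \sum_(0 <= n < N.+1 | P n) a n.
  rewrite [X in _ <= X]big_ltn_cond //= [X in _ <= X]big_add1 /=.
  rewrite big_nat_cond [X in _ <= X]big_nat_cond; apply: sum_sub_le; last by move=> *; exact: a0.
  move=> n /andP[/andP[_ nN] _]; rewrite nN /P /=; apply/allP => q.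
  rewrite mem_primes => /and3P[qp _ qn]; rewrite mem_filter qp mem_iota /=.
  by rewrite ltnS; apply: leq_trans (dvdn_leq _ qn) nN.
have S2 : \sum_(0 <= n < N.+1 | P n) a n <= \prod_(p <- s) L p.
  have := euler_le a a0 a1 amul N s (filter_all prime _).
  by rewrite -[iota 0 N.+1]/(index_iota 0 N.+1).
have S3 : \prod_(p <- s) L p <= expR (\sum_(p <- s) (L p - 1)).
  rewrite expR_sum; apply: ler_prod => p _; apply/andP; split.
    by apply: sumr_ge0 => k _; apply: a0.
  by rewrite -[X in X <= _](subrK 1) addrC expR_ge1Dx.
have XL p : L p - 1 = \sum_(0 <= k < N) a (p ^ k.+1)%N.
  by rewrite /L big_nat_recl // expn0 a1 addrAC subrr add0r.
have S4 : \sum_(p <- s) (L p - 1) <=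
    fine (Hsig sigma h) + (2%:R * fine (Dist2 beta f g) + c * Z).
  rewrite (bigID small) /=; apply: lerD.
    apply: le_trans (_ : \sum_(p <- s | small p) L p <= _).
      by apply: ler_sum => p _; rewrite lerBlDr lerDl.
    rewrite big_filter_cond.
    exact: (Hsig_bound N.+1).
  apply: le_trans (_ : \sum_(p <- s | ~~ small p)
      (2%:R * d p + c * ((p%:R `^ sigma) ^+ 2)^-1) <= _).
    rewrite big_seq_cond [X in _ <= X]big_seq_cond.
    apply: ler_sum => p /andP[ps sp]; rewrite XL.
    have pp : prime p by move: ps; rewrite mem_filter => /andP[].
    by apply: X_large => //; exact: rhoP.
  rewrite big_split /= -!big_distrr /=; apply: lerD.
    apply: ler_wpM2l; first by rewrite ler0n.
    rewrite big_filter_cond; apply: le_trans (Dist2_bound N.+1).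
    apply: sum_sub_le; first by move=> n /andP[].
    exact: d_ge0.
  apply: ler_wpM2l => //.
  apply: le_trans (HZ N.+1).
  rewrite big_filter_cond.
  apply: le_trans (_ : \sum_(0 <= n < N.+1 | (0 < n)%N) ((n%:R `^ sigma) ^+ 2)^-1 <= _).
    apply: sum_sub_le; first by move=> n /andP[/prime_gt0].
    by move=> n _; rewrite invr_ge0 exprn_ge0 // powR_ge0.
  rewrite big_ltn_cond //= big_nat_cond [X in _ <= X]big_nat_cond.
  rewrite (eq_bigr (fun n => (n%:R `^ (sigma * 2%:R))^-1)); last first.
    by move=> n _; rewrite powRrM powR_mulrn // powR_ge0.
  apply: sum_sub_le; first by move=> n /andP[->].
  by move=> n _; rewrite invr_ge0 powR_ge0.
apply: le_trans S1 _; apply: le_trans S2 _; apply: le_trans S3 _.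
by rewrite ler_expR.
Qed.

Lemma main_cvg : cvgn (series (fun n : nat => (normc (h n.+1)) ^+ 2 / (n.+1%:R `^ sigma))).
Proof.
apply: nondecreasing_is_cvgn.
  by apply: nondecreasing_series => n _ _; exact: (a0 n.+1).
have [M HM] := partial_bound.
by exists M => _ [n _ <-]; apply: HM.
Qed.
End Mult.

Theorem lemma1 (R : realType) (f g h : nat -> R[i]) (beta sigma : R) :
  arith_multiplicative f -> arith_multiplicative g ->
  (forall n : nat, (0 < n)%N -> normc (f n) <= 1) ->
  (forall n : nat, (0 < n)%N -> normc (g n) <= 1) ->
  (forall n : nat, (0 < n)%N -> g n = dconv f h n) ->
  0 < beta -> (Dist2 beta f g < +oo)%E ->
  1 / 2 < sigma -> beta <= sigma ->
  (Hsig sigma h < +oo)%E ->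
  cvgn (series (fun n : nat => (normc (h n.+1)) ^+ 2 / (n.+1%:R `^ sigma))).
Proof.
move=> hf hg nf ng hc hb hD hs hbs hH.
exact: (@main_cvg R f g h hf hg hc nf ng beta sigma hD hs hbs hH).
Qed.
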